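(* Let $n\ge1$, $L_1,L_2,\underline b>0$, and let $(k_p,k_i,k_d)\in(0,\infty)^3$ satisfy $k_p^2>2k_ik_d+\bar k$ and $k_d^2>k_p/\underline b+\bar k$, where $\bar k=(L_1+L_2)(k_p+k_d)/\underline b$. Then the $3n\times3n$ matrix $$P=\begin{bmatrix}2k_ik_p\underline bI_n&2k_ik_d\underline bI_n&k_iI_n\\2k_ik_d\underline bI_n&(2k_pk_d\underline b-k_i)I_n&k_pI_n\\k_iI_n&k_pI_n&k_dI_n\end{bmatrix}$$ is positive definite. Moreover, there exists $\alpha>0$, depending only on $(k_p,k_i,k_d,L_1,L_2,\underline b)$, such that for all $n\times n$ real matrices $a,b,\theta$ with $\|a\|\le L_1$, $\|b\|\le L_2$ and $\mathrm{Sym}[\theta]\ge\underline bI_n$, the matrix $$A=\begin{bmatrix}0_n&I_n&0_n\\0_n&0_n&I_n\\-k_i\theta&a-k_p\theta&b-k_d\theta\end{bmatrix}$$ satisfies $PA+A^{\mathsf T}P\le-\alpha I_{3n}$.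
   Context: $\|\cdot\|$ is the operator norm induced by the Euclidean norm; $\mathrm{Sym}[\theta]=(\theta+\theta^{\mathsf T})/2$; for symmetric matrices, $S_1\ge S_2$ means $S_1-S_2$ is positive semidefinite; $0_n$ and $I_n$ are the $n\times n$ zero and identity matrices. *)

(* Defs.v *)
From HB Require Import structures.
From mathcomp Require Import all_boot all_order all_algebra.
From mathcomp Require Import classical_sets reals.
Set Implicit Arguments. Unset Strict Implicit. Unset Printing Implicit Defensive.
Import Order.TTheory GRing.Theory Num.Theory.
Local Open Scope ring_scope.
Local Open Scope classical_set_scope.

Section Defs.
Variable R : realType.

Definition vnorm (m : nat) (x : 'cV[R]_m) : R := Num.sqrt (\sum_i (x i 0) ^+ 2).

Definition opnorm (m : nat) (a : 'M[R]_m) : R :=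
  sup [set vnorm (a *m x) | x in [set x : 'cV[R]_m | vnorm x <= 1]].

Definition qform (m : nat) (S : 'M[R]_m) (x : 'cV[R]_m) : R := (x^T *m S *m x) 0 0.

Definition psd (m : nat) (S : 'M[R]_m) : Prop := forall x : 'cV[R]_m, 0 <= qform S x.
Definition posdef (m : nat) (S : 'M[R]_m) : Prop :=
  S^T = S /\ forall x : 'cV[R]_m, x != 0 -> 0 < qform S x.

Definition loewner_ge (m : nat) (S1 S2 : 'M[R]_m) : Prop := psd (S1 - S2).

Definition Sym (m : nat) (th : 'M[R]_m) : 'M[R]_m := 2^-1 *: (th + th^T).

Definition mx3 (n : nat) (A11 A12 A13 A21 A22 A23 A31 A32 A33 : 'M[R]_n)
  : 'M[R]_(n + n + n) :=
  block_mx (block_mx A11 A12 A21 A22) (col_mx A13 A23) (row_mx A31 A32) A33.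

Definition kbar (L1 L2 bl kp kd : R) : R := (L1 + L2) * (kp + kd) / bl.

Definition Pmat (n : nat) (kp ki kd bl : R) : 'M[R]_(n + n + n) :=
  mx3 (2 * ki * kp * bl)%:M (2 * ki * kd * bl)%:M ki%:M
      (2 * ki * kd * bl)%:M (2 * kp * kd * bl - ki)%:M kp%:M
      ki%:M kp%:M kd%:M.

Definition Amat (n : nat) (kp ki kd : R) (a b th : 'M[R]_n) : 'M[R]_(n + n + n) :=
  mx3 0 1%:M 0
      0 0 1%:M
      (- (ki *: th)) (a - kp *: th) (b - kd *: th).

End Defs.

(* Main.v *)
Require Import Defs.
From HB Require Import structures.
From mathcomp Require Import all_boot all_order all_algebra.
From mathcomp Require Import classical_sets reals.
From mathcomp Require Import ring lra.
Import Order.TTheory GRing.Theory Num.Theory.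
Local Open Scope ring_scope.
Set Implicit Arguments. Unset Strict Implicit. Unset Printing Implicit Defensive.

Section Dot.
Variable R : realType.
Variable m : nat.
Implicit Types u v w : 'cV[R]_m.

Definition dot u v : R := (u^T *m v) 0 0.

Lemma dotE u v : dot u v = \sum_k u k 0 * v k 0.
Proof. by rewrite /dot mxE; apply: eq_bigr => k _; rewrite mxE. Qed.

Lemma dotC u v : dot u v = dot v u.
Proof. by rewrite !dotE; apply: eq_bigr => k _; rewrite mulrC. Qed.

Lemma dotDl u v w : dot (u + v) w = dot u w + dot v w.
Proof. by rewrite !dotE -big_split; apply: eq_bigr => k _; rewrite mxE mulrDl. Qed.

Lemma dotDr u v w : dot w (u + v) = dot w u + dot w v.
Proof. by rewrite dotC dotDl !(dotC w). Qed.

Lemma dotZl (c : R) u v : dot (c *: u) v = c * dot u v.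
Proof. by rewrite !dotE mulr_sumr; apply: eq_bigr => k _; rewrite mxE mulrA. Qed.

Lemma dotZr (c : R) u v : dot v (c *: u) = c * dot v u.
Proof. by rewrite dotC dotZl dotC. Qed.

Lemma dotNl u v : dot (- u) v = - dot u v.
Proof. by rewrite -scaleN1r dotZl mulN1r. Qed.

Lemma dotNr u v : dot v (- u) = - dot v u.
Proof. by rewrite dotC dotNl dotC. Qed.

Lemma dotBl u v w : dot (u - v) w = dot u w - dot v w.
Proof. by rewrite dotDl dotNl. Qed.

Lemma dotBr u v w : dot w (u - v) = dot w u - dot w v.
Proof. by rewrite dotDr dotNr. Qed.

Lemma dot0r u : dot u 0 = 0.
Proof. by rewrite dotE big1 // => k _; rewrite mxE mulr0. Qed.

Lemma dot_ge0 u : 0 <= dot u u.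
Proof. by rewrite dotE; apply: sumr_ge0 => k _; rewrite -expr2 sqr_ge0. Qed.

Lemma dot_eq0 u : dot u u = 0 -> u = 0.
Proof.
rewrite dotE => /eqP; rewrite psumr_eq0; last by move=> k _; rewrite -expr2 sqr_ge0.
move=> /allP H; apply/matrixP => i j; rewrite (ord1 j) mxE.
by have := H i (mem_index_enum i); rewrite -expr2 sqrf_eq0 => /implyP/(_ isT)/eqP.
Qed.

Lemma dot_mul (A : 'M[R]_m) u v : dot u (A *m v) = dot (A^T *m u) v.
Proof. by rewrite /dot trmx_mul trmxK mulmxA. Qed.

Lemma qformE (S : 'M[R]_m) x : qform S x = dot x (S *m x).
Proof. by rewrite /qform /dot mulmxA. Qed.

Lemma vnormE u : vnorm u = Num.sqrt (dot u u).
Proof. by rewrite /vnorm dotE; congr Num.sqrt; apply: eq_bigr => k _; rewrite expr2. Qed.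

Lemma CS2 u v : (dot u v)^+2 <= dot u u * dot v v.
Proof.
  have := dot_ge0 (dot v v *: u - dot u v *: v).
  rewrite !(dotBl, dotBr, dotZl, dotZr) (dotC v u).
  have [v0|vpos] := eqVneq (dot v v) 0.
    move=> _; have -> : v = 0 by apply: dot_eq0.
    by rewrite !dot0r expr0n /= mulr0.
  have vp : 0 < dot v v by rewrite lt_def vpos dot_ge0.
  move=> h.
  have e : dot v v * (dot v v * dot u u - dot u v * dot u v) -
    dot u v * (dot v v * dot u v - dot u v * dot v v) =
    dot v v * (dot u u * dot v v - dot u v ^+ 2) by ring.
  by move: h; rewrite e pmulr_rge0 // subr_ge0.
Qed.

Lemma CS u v : dot u v <= Num.sqrt (dot u u) * Num.sqrt (dot v v).
Proof.
have H := CS2 u v.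
rewrite -sqrtrM ?dot_ge0 //.
apply: (le_trans (ler_norm _)).
by rewrite -sqrtr_sqr ler_sqrt // mulr_ge0 // dot_ge0.
Qed.


Lemma dot_sqrt u : Num.sqrt (dot u u) ^+ 2 = dot u u.
Proof. by rewrite sqr_sqrtr // dot_ge0. Qed.

Lemma mx_row_dot (a : 'M[R]_m) y i : (a *m y) i 0 = dot (row i a)^T y.
Proof. by rewrite /dot trmxK -row_mul [RHS]mxE. Qed.

Lemma opnorm_bound (a : 'M[R]_m) L x : opnorm a <= L ->
  Num.sqrt (dot (a *m x) (a *m x)) <= L * Num.sqrt (dot x x).
Proof.
move=> hL.
set S := ([set vnorm (a *m y) | y in [set y : 'cV[R]_m | vnorm y <= 1]])%classic.
have hS : has_sup S.
  split.
    exists (vnorm (a *m 0)); exists 0 => //=.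
    by rewrite vnormE dot0r sqrtr0.
  exists (Num.sqrt (\sum_i dot (row i a)^T (row i a)^T)).
  move=> _ [y /= hy <-]; rewrite vnormE ler_sqrt; last first.
    by apply: sumr_ge0 => i _; apply: dot_ge0.
  have hy1 : dot y y <= 1.
    move: hy; rewrite vnormE -(ler_sqrt (dot y y)) ?ler01 //.
    by rewrite sqrtr1.
  rewrite [X in X <= _]dotE; apply: ler_sum => i _.
  rewrite -expr2 mx_row_dot; apply: (le_trans (CS2 _ _)).
  by rewrite ler_piMr ?dot_ge0.
have hy : forall y : 'cV[R]_m, dot y y = 1 -> Num.sqrt (dot (a *m y) (a *m y)) <= L.
  move=> y hy; apply: le_trans hL; rewrite -vnormE; apply: sup_upper_bound => //.
  by exists y => //=; rewrite vnormE hy sqrtr1.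
have [x0|xn0] := eqVneq (dot x x) 0.
  have -> : x = 0 by apply: dot_eq0.
  by rewrite mulmx0 dot0r sqrtr0 mulr0.
have xp : 0 < dot x x by rewrite lt_def xn0 dot_ge0.
set nx := Num.sqrt (dot x x).
have nxp : 0 < nx by rewrite sqrtr_gt0.
have := hy (nx^-1 *: x).
have e : forall u : 'cV[R]_m, dot (nx^-1 *: u) (nx^-1 *: u) = nx^-1 ^+ 2 * dot u u.
  by move=> u; rewrite dotZl dotZr mulrA -expr2.
rewrite -scalemxAr !e sqrtrM ?sqr_ge0 // sqrtr_sqr.
move=> h.
have h1 : nx^-1 ^+ 2 * dot x x = 1 by rewrite /nx exprVn dot_sqrt mulVf.
have h2 := h h1; rewrite ger0_norm in h2; last by rewrite invr_ge0 ltW.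
set N := Num.sqrt (dot (a *m x) (a *m x)) in h2 *.
have -> : N = nx * (nx^-1 * N) by rewrite mulrA mulfV ?mul1r // gt_eqF.
by rewrite [X in _ <= X]mulrC ler_wpM2l // ltW.
Qed.


Lemma norm_tri u v :
  Num.sqrt (dot (u + v) (u + v)) <= Num.sqrt (dot u u) + Num.sqrt (dot v v).
Proof.
have h1 := sqrtr_ge0 (dot u u); have h2 := sqrtr_ge0 (dot v v).
rewrite -(ger0_norm (addr_ge0 h1 h2)) -sqrtr_sqr ler_sqrt ?sqr_ge0 //.
rewrite dotDl !dotDr (dotC v u) sqrrD !dot_sqrt.
have := CS u v; lra.
Qed.

Lemma norm_scale (c : R) u :
  Num.sqrt (dot (c *: u) (c *: u)) = `|c| * Num.sqrt (dot u u).
Proof. by rewrite dotZl dotZr mulrA -expr2 sqrtrM ?sqr_ge0 // sqrtr_sqr. Qed.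

End Dot.

Section Blocks.
Variable R : realType.
Variable n : nat.

Definition col3 (x1 x2 x3 : 'cV[R]_n) : 'cV[R]_(n + n + n) := col_mx (col_mx x1 x2) x3.

Lemma col3_split (x : 'cV[R]_(n + n + n)) :
  x = col3 (usubmx (usubmx x)) (dsubmx (usubmx x)) (dsubmx x).
Proof. by rewrite /col3 !vsubmxK. Qed.

Lemma mx3_mul (A11 A12 A13 A21 A22 A23 A31 A32 A33 : 'M[R]_n) x1 x2 x3 :
  mx3 A11 A12 A13 A21 A22 A23 A31 A32 A33 *m col3 x1 x2 x3 =
  col3 (A11 *m x1 + A12 *m x2 + A13 *m x3) (A21 *m x1 + A22 *m x2 + A23 *m x3)
       (A31 *m x1 + A32 *m x2 + A33 *m x3).
Proof.
by rewrite /mx3 /col3 mul_block_col mul_block_col mul_col_mx mul_row_col add_col_mx.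
Qed.

Lemma dot_col3 x1 x2 x3 y1 y2 y3 :
  dot (col3 x1 x2 x3) (col3 y1 y2 y3) = dot x1 y1 + dot x2 y2 + dot x3 y3.
Proof.
have h : forall m1 m2 (a c : 'cV[R]_m1) (b d : 'cV[R]_m2),
    dot (col_mx a b) (col_mx c d) = dot a c + dot b d.
  by move=> m1 m2 a c b d; rewrite /dot tr_col_mx mul_row_col mxE.
by rewrite /col3 !h.
Qed.

Lemma mx3_tr (A11 A12 A13 A21 A22 A23 A31 A32 A33 : 'M[R]_n) :
  (mx3 A11 A12 A13 A21 A22 A23 A31 A32 A33)^T =
  mx3 A11^T A21^T A31^T A12^T A22^T A32^T A13^T A23^T A33^T.
Proof. by rewrite /mx3 tr_block_mx tr_block_mx tr_col_mx tr_row_mx. Qed.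

Lemma col3_eq0 x1 x2 x3 : x1 = 0 -> x2 = 0 -> x3 = 0 -> col3 x1 x2 x3 = 0.
Proof. by move=> -> -> ->; rewrite /col3 !col_mx0. Qed.

End Blocks.
Lemma ell_bounds (R : realType) (i p d q l1 l2 : R) :
  0 < i -> 0 < p -> 0 < d -> 0 <= q -> 0 <= l1 -> 0 <= l2 ->
  p ^+ 2 > 2 * i * d + (l1 + l2) * (p + d) ->
  d ^+ 2 > q + (l1 + l2) * (p + d) ->
  2 * l1 <= d /\ 2 * l2 <= p.
Proof.
move=> hi hp hd hq h1 h2 H1 H2.
have hid : 0 < i * d by apply: mulr_gt0.
have [hpd|hpd] := lerP p d.
  split.
  - rewrite leNgt; apply/negP => c.
    have : d * (p + d) <= 2 * l1 * (p + d) by rewrite ler_pM2r ?ltW //; lra.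
    nra.
  - rewrite leNgt; apply/negP => c.
    have : p * (p + d) <= 2 * l2 * (p + d) by rewrite ler_pM2r ?ltW //; lra.
    nra.
split.
- rewrite leNgt; apply/negP => c.
  have : d * (p + d) <= 2 * l1 * (p + d) by rewrite ler_pM2r ?ltW //; lra.
  nra.
- rewrite leNgt; apply/negP => c.
  have : p * (p + d) <= 2 * l2 * (p + d) by rewrite ler_pM2r ?ltW //; lra.
  nra.
Qed.

Lemma poly_part (R : realType) (i p d q l1 l2 s1 s2 s3 nu : R) :
  0 < i -> 0 < p -> 0 < d -> 0 <= l1 -> 0 <= l2 ->
  2 * l1 <= d -> 2 * l2 <= p ->
  0 <= s1 -> 0 <= s2 -> 0 <= s3 ->
  nu <= i ^+ 2 / 3 -> nu <= p ^+ 2 - 2 * i * d - (l1 + l2) * (p + d) ->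
  nu <= d ^+ 2 - q - (l1 + l2) * (p + d) ->
  (i * s1 + p * s2 + d * s3) * (l1 * s2 + l2 * s3) + nu * (s1 ^+ 2 + s2 ^+ 2 + s3 ^+ 2)
  <= i ^+ 2 * s1 ^+ 2 + (p ^+ 2 - 2 * i * d) * s2 ^+ 2 + (d ^+ 2 - q) * s3 ^+ 2.
Proof.
move=> hi hp hd h1 h2 e1 e2 hs1 hs2 hs3 n1 n2 n3.
have a1 : 0 <= (2 * i * s1 - 3 * l1 * s2) ^+ 2 by apply: sqr_ge0.
have a2 : 0 <= (2 * i * s1 - 3 * l2 * s3) ^+ 2 by apply: sqr_ge0.
have a3 : 0 <= p * l2 * (s2 - s3) ^+ 2 by rewrite mulr_ge0 ?sqr_ge0 // mulr_ge0 // ltW.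
have a4 : 0 <= d * l1 * (s2 - s3) ^+ 2 by rewrite mulr_ge0 ?sqr_ge0 // mulr_ge0 // ltW.
have a5 : 0 <= l1 * s2 ^+ 2 * (d - 2 * l1) by rewrite !mulr_ge0 ?sqr_ge0 // subr_ge0.
have a6 : 0 <= l2 * s3 ^+ 2 * (p - 2 * l2) by rewrite !mulr_ge0 ?sqr_ge0 // subr_ge0.
have a7 : 0 <= (i ^+ 2 / 3 - nu) * s1 ^+ 2 by rewrite mulr_ge0 ?sqr_ge0 // subr_ge0.
have a8 : 0 <= (p ^+ 2 - 2 * i * d - (l1 + l2) * (p + d) - nu) * s2 ^+ 2 by rewrite mulr_ge0 ?sqr_ge0 // subr_ge0.
have a9 : 0 <= (d ^+ 2 - q - (l1 + l2) * (p + d) - nu) * s3 ^+ 2 by rewrite mulr_ge0 ?sqr_ge0 // subr_ge0.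
have b1 : 0 <= d * l1 * s2 ^+ 2 by rewrite !mulr_ge0 ?sqr_ge0 // ltW.
have b2 : 0 <= p * l1 * s3 ^+ 2 by rewrite !mulr_ge0 ?sqr_ge0 // ltW.
have b3 : 0 <= p * l2 * s2 ^+ 2 by rewrite !mulr_ge0 ?sqr_ge0 // ltW.
have b4 : 0 <= d * l2 * s2 ^+ 2 by rewrite !mulr_ge0 ?sqr_ge0 // ltW.
have b5 : 0 <= d * l1 * s3 ^+ 2 by rewrite !mulr_ge0 ?sqr_ge0 // ltW.
have b6 : 0 <= p * l2 * s3 ^+ 2 by rewrite !mulr_ge0 ?sqr_ge0 // ltW.
lra.
Qed.
Ltac dexp := rewrite ?(dotDl, dotDr, dotZl, dotZr, dotNl, dotNr, dotBl, dotBr).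

Lemma Pmat_sym (R : realType) n (kp ki kd bl : R) : (Pmat n kp ki kd bl)^T = Pmat n kp ki kd bl.
Proof. by rewrite /Pmat mx3_tr !tr_scalar_mx. Qed.

Lemma Pmat_mul (R : realType) n (kp ki kd bl : R) x1 x2 x3 :
  Pmat n kp ki kd bl *m col3 x1 x2 x3 =
  col3 ((2 * ki * kp * bl) *: x1 + (2 * ki * kd * bl) *: x2 + ki *: x3)
       ((2 * ki * kd * bl) *: x1 + (2 * kp * kd * bl - ki) *: x2 + kp *: x3)
       (ki *: x1 + kp *: x2 + kd *: x3).
Proof. by rewrite /Pmat mx3_mul !mul_scalar_mx. Qed.

Lemma part1 (R : realType) (bl kp ki kd : R) n :
  0 < bl -> 0 < kp -> 0 < ki -> 0 < kd ->
  kp ^+ 2 > 2 * ki * kd -> bl * kd ^+ 2 > kp ->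
  posdef (Pmat n kp ki kd bl).
Proof.
move=> hb hp hi hd H1 H2; split; first exact: Pmat_sym.
move=> x xn0; rewrite qformE (col3_split x) Pmat_mul dot_col3.
move: xn0; rewrite {1}(col3_split x).
set x1 := usubmx _; set x2 := dsubmx (usubmx x); set x3 := dsubmx x.
move=> xn0.
set aa := ki * (2 * kp * bl * kd - ki).
set ee := ki * (2 * kd ^+ 2 * bl - kp).
set cc := 2 * kp * kd ^+ 2 * bl - ki * kd - kp ^+ 2.
have ha : 0 < aa.
  rewrite /aa mulr_gt0 // subr_gt0.
  have : 0 < kd * kp by rewrite mulr_gt0.
  nra.
have hac : 0 < aa * cc - ee ^+ 2.
  have -> : aa * cc - ee ^+ 2 = ki * kd * (4 * bl^+2 * kd^+2 * (kp^+2 - ki * kd) - 2 * kp^+3 * bl + ki ^+2).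
    by rewrite /aa /cc /ee; ring.
  rewrite mulr_gt0 ?mulr_gt0 //.
  have h3 : 0 < kp ^+ 2 by rewrite exprn_gt0.
  have h4 : 2 * kp^+2 * bl * (bl * kd ^+ 2) > 2 * kp^+2 * bl * kp.
    by rewrite ltr_pM2l // !mulr_gt0.
  have h5 : bl^+2 * kd^+2 * (kp^+2 - 2 * ki * kd) > 0.
    by rewrite !mulr_gt0 ?exprn_gt0 // subr_gt0.
  have h6 : 0 < ki ^+ 2 by rewrite exprn_gt0.
  nra.
set w1 := kd *: x3 + ki *: x1 + kp *: x2.
set w2 := aa *: x1 + ee *: x2.
have key : aa * kd * (dot x1 (2 * ki * kp * bl *: x1 + 2 * ki * kd * bl *: x2 + ki *: x3) +
   dot x2 (2 * ki * kd * bl *: x1 + (2 * kp * kd * bl - ki) *: x2 + kp *: x3) +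
   dot x3 (ki *: x1 + kp *: x2 + kd *: x3)) =
   aa * dot w1 w1 + dot w2 w2 + (aa * cc - ee ^+ 2) * dot x2 x2.
  rewrite /w1 /w2; dexp.
  rewrite (dotC x2 x1) (dotC x3 x1) (dotC x3 x2).
  rewrite /aa /cc /ee; ring.
have g1 := dot_ge0 w1; have g2 := dot_ge0 w2; have g3 := dot_ge0 x2.
have had : 0 < aa * kd by rewrite mulr_gt0.
rewrite -(pmulr_rgt0 _ had) key.
have [z2|nz2] := eqVneq (dot x2 x2) 0.
  have ex2 : x2 = 0 by apply: dot_eq0.
  have [z1|nz1] := eqVneq (dot w2 w2) 0.
    have ew2 : w2 = 0 by apply: dot_eq0.
    have ex1 : x1 = 0.
      by move: ew2; rewrite /w2 ex2 scaler0 addr0 => /eqP; rewrite scaler_eq0 gt_eqF //= => /eqP.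
    have [z0|nz0] := eqVneq (dot w1 w1) 0.
      have ew1 : w1 = 0 by apply: dot_eq0.
      have ex3 : x3 = 0.
        by move: ew1; rewrite /w1 ex1 ex2 !scaler0 !addr0 => /eqP; rewrite scaler_eq0 gt_eqF //= => /eqP.
      by move: xn0; rewrite col3_eq0 ?eqxx.
    have : 0 < dot w1 w1 by rewrite lt_def nz0.
    nra.
  have : 0 < dot w2 w2 by rewrite lt_def nz1.
  nra.
have : 0 < dot x2 x2 by rewrite lt_def nz2.
nra.
Qed.
Lemma Amat_mul (R : realType) n (kp ki kd : R) (a b th : 'M[R]_n) x1 x2 x3 :
  Amat kp ki kd a b th *m col3 x1 x2 x3 =
  col3 x2 x3 (a *m x2 + b *m x3 - (ki *: (th *m x1) + kp *: (th *m x2) + kd *: (th *m x3))).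
Proof.
rewrite /Amat mx3_mul !mul0mx !mul_scalar_mx !scale1r !add0r addr0.
congr col3; rewrite mulNmx !mulmxBl -!scalemxAl.
apply/matrixP => i j; rewrite !mxE; ring.
Qed.

Lemma Sym_fact (R : realType) n (th : 'M[R]_n) bl z :
  loewner_ge (Sym th) (bl%:M) -> bl * dot z z <= dot z (th *m z).
Proof.
move=> /(_ z); rewrite qformE mulmxBl mul_scalar_mx dotBr dotZr /Sym -scalemxAl dotZr.
rewrite mulmxDl dotDr (dot_mul th^T) trmxK (dotC (th *m z)).
rewrite subr_ge0; lra.
Qed.

Lemma part2 (R : realType) (L1 L2 bl kp ki kd nu : R) n (a b th : 'M[R]_n) :
  0 < L1 -> 0 < L2 -> 0 < bl -> 0 < kp -> 0 < ki -> 0 < kd ->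
  kp ^+ 2 > 2 * ki * kd + kbar L1 L2 bl kp kd ->
  kd ^+ 2 > kp / bl + kbar L1 L2 bl kp kd ->
  0 <= nu -> nu <= ki ^+ 2 / 3 -> nu <= kp ^+ 2 - 2 * ki * kd - kbar L1 L2 bl kp kd ->
  nu <= kd ^+ 2 - kp / bl - kbar L1 L2 bl kp kd ->
  opnorm a <= L1 -> opnorm b <= L2 -> loewner_ge (Sym th) (bl%:M) ->
  loewner_ge (- ((bl * nu)%:M))
    (Pmat n kp ki kd bl *m Amat kp ki kd a b th + (Amat kp ki kd a b th)^T *m Pmat n kp ki kd bl).
Proof.
move=> hL1 hL2 hb hp hi hd H1 H2 hnu n1 n2 n3 ha hbb hth x.
rewrite qformE mulmxBl dotBr mulNmx mul_scalar_mx dotNr dotZr.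
rewrite mulmxDl dotDr -!mulmxA.
rewrite (dot_mul (Pmat n kp ki kd bl)) Pmat_sym (dot_mul (Amat kp ki kd a b th)^T) trmxK.
rewrite (dotC (Amat kp ki kd a b th *m x)).
rewrite (col3_split x) Pmat_mul Amat_mul !dot_col3.
set x1 := usubmx _; set x2 := dsubmx (usubmx x); set x3 := dsubmx x.
set z := ki *: x1 + kp *: x2 + kd *: x3.
have hS := Sym_fact z hth.
rewrite {2}/z mulmxDr mulmxDr -!scalemxAr in hS.
have [m1 em1] : exists m1, m1 = Num.sqrt (dot x1 x1) by eexists.
have [m2 em2] : exists m2, m2 = Num.sqrt (dot x2 x2) by eexists.
have [m3 em3] : exists m3, m3 = Num.sqrt (dot x3 x3) by eexists.
have [mz emz] : exists mz, mz = Num.sqrt (dot z z) by eexists.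
have g1 : 0 <= m1 by rewrite em1 sqrtr_ge0.
have g2 : 0 <= m2 by rewrite em2 sqrtr_ge0.
have g3 : 0 <= m3 by rewrite em3 sqrtr_ge0.
have gz : 0 <= mz by rewrite emz sqrtr_ge0.
have q1 : m1 ^+ 2 = dot x1 x1 by rewrite em1 dot_sqrt.
have q2 : m2 ^+ 2 = dot x2 x2 by rewrite em2 dot_sqrt.
have q3 : m3 ^+ 2 = dot x3 x3 by rewrite em3 dot_sqrt.
have hCa : dot z (a *m x2) <= mz * (L1 * m2).
  apply: (le_trans (CS _ _)); rewrite -emz ler_wpM2l //.
  by rewrite em2; apply: opnorm_bound.
have hCb : dot z (b *m x3) <= mz * (L2 * m3).
  apply: (le_trans (CS _ _)); rewrite -emz ler_wpM2l //.
  by rewrite em3; apply: opnorm_bound.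
have hRz : mz <= ki * m1 + kp * m2 + kd * m3.
  rewrite emz /z; apply: (le_trans (norm_tri _ _)).
  rewrite norm_scale (ger0_norm (ltW hd)) -em3 lerD2r.
  apply: (le_trans (norm_tri _ _)).
  by rewrite !norm_scale (ger0_norm (ltW hi)) (ger0_norm (ltW hp)) -em1 -em2.
have hT : mz * (L1 * m2 + L2 * m3) <= (ki * m1 + kp * m2 + kd * m3) * (L1 * m2 + L2 * m3).
  by rewrite ler_wpM2r // addr_ge0 // mulr_ge0 // ltW.
set l1 := L1 / bl; set l2 := L2 / bl; set q := kp / bl.
have bne : bl != 0 by rewrite gt_eqF.
have eL1 : L1 = bl * l1 by rewrite /l1 mulrC divfK.
have eL2 : L2 = bl * l2 by rewrite /l2 mulrC divfK.
have eq : kp = bl * q by rewrite /q mulrC divfK.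
have ek : kbar L1 L2 bl kp kd = (l1 + l2) * (kp + kd).
  by rewrite /kbar /l1 /l2; field.
rewrite ek in H1 H2 n2 n3.
have hl1 : 0 <= l1 by rewrite /l1 divr_ge0 ?ltW.
have hl2 : 0 <= l2 by rewrite /l2 divr_ge0 ?ltW.
have hq : 0 <= q by rewrite /q divr_ge0 ?ltW.
have [e1 e2] := ell_bounds hi hp hd hq hl1 hl2 H1 H2.
have PP := poly_part hi hp hd hl1 hl2 e1 e2 g1 g2 g3 n1 n2 n3.
have PP2 := ler_wpM2l (ltW hb) PP.
have PP3 : (ki * m1 + kp * m2 + kd * m3) * (L1 * m2 + L2 * m3) + bl * nu * (m1 ^+ 2 + m2 ^+ 2 + m3 ^+ 2)
   <= bl * ki ^+ 2 * m1 ^+ 2 + bl * (kp ^+ 2 - 2 * ki * kd) * m2 ^+ 2 + (bl * kd ^+ 2 - kp) * m3 ^+ 2.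
  have -> : (ki * m1 + kp * m2 + kd * m3) * (L1 * m2 + L2 * m3) + bl * nu * (m1 ^+ 2 + m2 ^+ 2 + m3 ^+ 2)
     = bl * ((ki * m1 + kp * m2 + kd * m3) * (l1 * m2 + l2 * m3) + nu * (m1 ^+ 2 + m2 ^+ 2 + m3 ^+ 2)).
    by rewrite eL1 eL2; ring.
  have -> : bl * ki ^+ 2 * m1 ^+ 2 + bl * (kp ^+ 2 - 2 * ki * kd) * m2 ^+ 2 + (bl * kd ^+ 2 - kp) * m3 ^+ 2
     = bl * (ki ^+ 2 * m1 ^+ 2 + (kp ^+ 2 - 2 * ki * kd) * m2 ^+ 2 + (kd ^+ 2 - q) * m3 ^+ 2).
    by rewrite eq; ring.
  exact: PP2.
rewrite q1 q2 q3 in PP3.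
move: hS hCa hCb; rewrite /z; dexp.
rewrite ?(dotC x2 x1) ?(dotC x3 x1) ?(dotC x3 x2) => hS hCa hCb.
rewrite ?(dotC x2 x1) ?(dotC x3 x1) ?(dotC x3 x2).
have hS0 : 0 <= bl * nu * (dot x1 x1 + dot x2 x2 + dot x3 x3).
  by rewrite !mulr_ge0 ?addr_ge0 ?dot_ge0 // ltW.
lra.
Qed.

Unset Implicit Arguments.
Theorem proposition4p2 (R : realType) (L1 L2 bl kp ki kd : R) :
  0 < L1 -> 0 < L2 -> 0 < bl -> 0 < kp -> 0 < ki -> 0 < kd ->
  kp ^+ 2 > 2 * ki * kd + kbar L1 L2 bl kp kd ->
  kd ^+ 2 > kp / bl + kbar L1 L2 bl kp kd ->
  (forall n : nat, (1 <= n)%N -> posdef (Pmat n kp ki kd bl)) /\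
  exists alpha : R, 0 < alpha /\
    forall n : nat, (1 <= n)%N ->
    forall a b th : 'M[R]_n,
      opnorm a <= L1 -> opnorm b <= L2 -> loewner_ge (Sym th) (bl%:M) ->
      let P := Pmat n kp ki kd bl in
      let A := Amat kp ki kd a b th in
      loewner_ge (- (alpha%:M)) (P *m A + A^T *m P).
Proof.
move=> hL1 hL2 hb hp hi hd H1 H2.
have kb0 : 0 <= kbar L1 L2 bl kp kd.
  by rewrite /kbar divr_ge0 ?mulr_ge0 ?addr_ge0 // ltW.
split.
  move=> n _; apply: part1 => //.
  - have : 0 <= kbar L1 L2 bl kp kd := kb0. lra.
  - have e : kp = bl * (kp / bl) by rewrite mulrC divfK // gt_eqF.
    rewrite [X in X < _]e ltr_pM2l //; lra.
set c1 := ki ^+ 2 / 3.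
set c2 := kp ^+ 2 - 2 * ki * kd - kbar L1 L2 bl kp kd.
set c3 := kd ^+ 2 - kp / bl - kbar L1 L2 bl kp kd.
set nu := Num.min c1 (Num.min c2 c3).
have hc1 : 0 < c1 by rewrite /c1 divr_gt0 ?exprn_gt0.
have hc2 : 0 < c2 by rewrite /c2; lra.
have hc3 : 0 < c3 by rewrite /c3; lra.
have hnu : 0 < nu by rewrite /nu !lt_min hc1 hc2 hc3.
have n1 : nu <= c1 by rewrite /nu !ge_min lexx.
have n2 : nu <= c2 by rewrite /nu !ge_min lexx !orbT.
have n3 : nu <= c3 by rewrite /nu !ge_min lexx !orbT.
exists (bl * nu); split; first by rewrite mulr_gt0.
move=> n _ a b th ha hbb hth P A.
exact: (part2 hL1 hL2 hb hp hi hd H1 H2 (ltW hnu) n1 n2 n3 ha hbb hth).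
Qed.
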